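(* Let $c_1,\dots,c_7$ be real numbers and let $\mathcal{C}$ be the $6\times 6$ matrix \[ \mathcal{C}=\begin{pmatrix} 0 & c_5 & 0 & c_1 & 0 & 0 \\ c_4 & 0 & c_7 & 0 & c_2 & 0 \\ 0 & c_6 & 0 & 0 & 0 & c_3 \\ c_1 & 0 & 0 & 0 & c_5 & 0 \\ 0 & c_2 & 0 & c_4 & 0 & c_7 \\ 0 & 0 & c_3 & 0 & c_6 & 0 \end{pmatrix}. \] Then $\det\mathcal{C} = -\left(c_1c_2c_3 - c_1c_6c_7 - c_3c_4c_5\right)^2$. Consequently, $\mathcal{C}$ is non-singular (equivalently, for every vector $(I^1,\dots,I^6)^\top\in\mathbb{R}^6$ the linear system $(I^1,\dots,I^6)^\top=\mathcal{C}\,(dI_1,\dots,dI_6)^\top$ has a unique solution $(dI_1,\dots,dI_6)^\top$) if and only if $c_1c_2c_3 - c_1c_6c_7 - c_3c_4c_5 \neq 0$.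
   Context: In the paper, $c_1,c_2,c_3$ are contralateral and $c_4,\dots,c_7$ are ipsilateral coupling strengths in a network of six coupled oscillators (one per insect leg); the matrix $\mathcal{C}$ encodes how an external input added to each unit can be redistributed as perturbations $dI_j$ of the coupling terms. *)

(* Defs.v *)
From mathcomp Require Import all_boot all_order all_algebra.
Set Implicit Arguments. Unset Strict Implicit. Unset Printing Implicit Defensive.
Import GRing.Theory Num.Theory.
Local Open Scope ring_scope.

(* The 6x6 coupling matrix C of the paper, rows/columns indexed 0..5
   (paper index k corresponds to ordinal k-1). *)
Definition couplingMx (R : nzRingType) (c1 c2 c3 c4 c5 c6 c7 : R) : 'M[R]_6 :=
  \matrix_(i < 6, j < 6)
    match nat_of_ord i, nat_of_ord j with
    | 0, 1 => c5 | 0, 3 => c1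
    | 1, 0 => c4 | 1, 2 => c7 | 1, 4 => c2
    | 2, 1 => c6 | 2, 5 => c3
    | 3, 0 => c1 | 3, 4 => c5
    | 4, 1 => c2 | 4, 3 => c4 | 4, 5 => c7
    | 5, 2 => c3 | 5, 4 => c6
    | _, _ => 0
    end.

(* Main.v *)
Require Import Defs.
From mathcomp Require Import all_boot all_order all_algebra ring.
Import GRing.Theory Num.Theory.
Local Open Scope ring_scope.
Section L.
Variable R : comNzRingType.
Definition mxL n (L : seq (seq R)) : 'M[R]_n := \matrix_(i, j) nth 0 (nth [::] L i) j.
Definition rmcol (j : nat) (s : seq R) := take j s ++ drop j.+1 s.
Definition minorL j (L : seq (seq R)) := map (rmcol j) (behead L).
Lemma nth_map0 (f : seq R -> seq R) s i : f [::] = [::] -> nth [::] (map f s) i = f (nth [::] s i).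
Proof. move=> f0; elim: s i => [|x s IH] [|i] //=. Qed.
Lemma nth_rmcol j s k : nth 0 (rmcol j s) k = nth 0 s (bump j k).
Proof.
rewrite /rmcol nth_cat size_take /bump.
case: (ltnP j (size s)) => Hj.
  case: ifP => Hk; first by rewrite nth_take // leqNgt Hk.
  rewrite nth_drop leqNgt ltnNge; move/negbT: Hk; rewrite -leqNgt => Hk.
  by rewrite Hk /=; congr nth; rewrite addSn add1n subnKC.
case: ifP => Hk.
  rewrite take_oversize // (_ : (j <= k)%N = false) //.
  by apply/negbTE; rewrite -ltnNge; exact: leq_trans Hk Hj.
rewrite drop_oversize; last exact: leq_trans Hj (leqnSn j).
rewrite nth_nil nth_default //.
move/negbT: Hk; rewrite -leqNgt => Hk; exact: leq_trans Hk (leq_addl _ _).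
Qed.
Lemma detL n (L : seq (seq R)) :
  \det (mxL n.+2 L) = \sum_(j < n.+2) nth 0 (head [::] L) j * ((-1) ^+ j * \det (mxL n.+1 (minorL j L))).
Proof.
rewrite (expand_det_row _ ord0); apply: eq_bigr => j _.
rewrite /cofactor add0n {1}/mxL mxE; congr (_ * (_ * \det _)).
apply/matrixP => i k; rewrite /mxL !mxE /minorL nth_map0 // nth_rmcol.
by case: L => [|r L] /=; rewrite ?nth_nil.
Qed.
Lemma det1L (L : seq (seq R)) : \det (mxL 1 L) = nth 0 (head [::] L) 0.
Proof. by rewrite [X in \det X]mx11_scalar det_scalar1 /mxL mxE; case: L. Qed.
End L.
Lemma d (R : comNzRingType) (c1 c2 c3 c4 c5 c6 c7 : R) :
 \det (couplingMx c1 c2 c3 c4 c5 c6 c7) = - (c1 * c2 * c3 - c1 * c6 * c7 - c3 * c4 * c5) ^+ 2.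
Proof.
have -> : couplingMx c1 c2 c3 c4 c5 c6 c7 = mxL R 6
  [:: [:: 0; c5; 0; c1; 0; 0];
      [:: c4; 0; c7; 0; c2; 0];
      [:: 0; c6; 0; 0; 0; c3];
      [:: c1; 0; 0; 0; c5; 0];
      [:: 0; c2; 0; c4; 0; c7];
      [:: 0; 0; c3; 0; c6; 0]].
  apply/matrixP => i j; rewrite !mxE.
  by case: i => [[|[|[|[|[|[|i]]]]]] Hi] //; case: j => [[|[|[|[|[|[|j]]]]]] Hj].
rewrite detL !big_ord_recl !big_ord0 /= !(mul0r, add0r, addr0).
rewrite !detL !big_ord_recl !big_ord0 /= !(mul0r, add0r, addr0).
rewrite !detL !big_ord_recl !big_ord0 /= !(mul0r, add0r, addr0).
rewrite !detL !big_ord_recl !big_ord0 /= !(mul0r, add0r, addr0).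
rewrite !detL !big_ord_recl !big_ord0 /= !(mul0r, add0r, addr0).
rewrite !det1L /=.
rewrite /bump /=. ring.
Qed.

Theorem mainTheorem1 (R : realFieldType) (c1 c2 c3 c4 c5 c6 c7 : R) :
  let C := couplingMx c1 c2 c3 c4 c5 c6 c7 in
  let D := c1 * c2 * c3 - c1 * c6 * c7 - c3 * c4 * c5 in
  [/\ \det C = - D ^+ 2,
      (C \in unitmx) <-> D != 0 &
      (forall I : 'cV[R]_6, exists! dI : 'cV[R]_6, I = C *m dI) <-> D != 0].
Proof.
move=> C D.
have hdet : \det C = - D ^+ 2 by exact: d.
have hu : (C \in unitmx) <-> D != 0.
  by rewrite unitmxE unitfE hdet oppr_eq0 expf_eq0 /=; split.
split => //; split.
- move=> H; apply/negP => /eqP HD0.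
  have /det0P [v v0 hv] : \det C^T == 0.
    by rewrite det_tr hdet HD0 expr0n oppr0.
  have [dI [_ Hd]] := H 0.
  have e1 : dI = 0 by apply: Hd; rewrite mulmx0.
  have e2 : dI = v^T by apply: Hd; rewrite -[C]trmxK -trmx_mul hv trmx0.
  by move: v0; rewrite -[v]trmxK -e2 e1 trmx0 eqxx.
- move=> HD I; have Cu : C \in unitmx by apply/hu.
  exists (invmx C *m I); split; first by rewrite mulmxA mulmxV ?mul1mx.
  by move=> y ->; rewrite mulmxA mulVmx ?mul1mx.
Qed.
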